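(* Let $G_1,\dots,G_r$ and $H_1,\dots,H_r$ be finite simple graphs, $S=\bigoplus_{d=1}^r\widehat{G_d}\otimes\mathcal{C}_d$ and $T=\bigoplus_{d=1}^r\widehat{H_d}\otimes\mathcal{C}_d$. The following are equivalent: (1) $T\le S$; (2) there exist a function $\varphi:\bigsqcup_{d=1}^rV(H_d)\to\bigsqcup_{d=1}^rV(G_d)$ and isometries $U_h:\mathbb{C}^{\pi(h)}\to\mathbb{C}^{\pi(\varphi(h))}$ for $h\in\bigsqcup_{d}V(H_d)$ such that for all $h,h'$: if $h\not\simeq h'$ then ($\varphi(h)\not\simeq\varphi(h')$ or $U_h^*U_{h'}=0$); and if $h\simeq h'$ and $\varphi(h)\simeq\varphi(h')$ then $U_h^*U_{h'}=cI_{\pi(h)}$ for some $c\in\mathbb{C}$.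
   Context: A noncommutative graph is a subspace $S\subseteq B(\mathcal{H})$ ($\mathcal{H}$ finite-dimensional complex Hilbert space) with $I\in S$, $S^*=S$. A cohomomorphism from $T\subseteq B(\mathcal{K})$ to $S\subseteq B(\mathcal{H})$ is a finite family of linear maps $E_i:\mathcal{K}\to\mathcal{H}$ with $\sum_iE_i^*E_i=I$ and $E_i^*SE_j\subseteq T$ for all $i,j$; write $T\le S$ if one exists. Tensor product and direct sum of noncommutative graphs are $\operatorname{span}\{A\otimes B\}$ and $\{A\oplus B\}$. For a finite simple graph $G$, $\widehat{G}=\operatorname{span}\{|x\rangle\langle x'|:x,x'\in V(G),\ x=x'\text{ or }x\sim x'\}\subseteq B(\mathbb{C}^{V(G)})$; $\mathcal{C}_d=\mathbb{C}I\subseteq B(\mathbb{C}^d)$. For a direct sum $\bigoplus_{d=1}^r\widehat{G_d}\otimes\mathcal{C}_d$, $\pi:\bigsqcup_dV(G_d)\to\{1,\dots,r\}$ sends $g\in V(G_d)$ to $d$, and for $g\in V(G_d)$, $g'\in V(G_{d'})$ we write $g\simeq g'$ iff $d=d'$ and $g,g'$ are equal or adjacent in $G_d$ (similarly for the $H_d$). *)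

(* Defs.v *)
From HB Require Import structures.
From mathcomp Require Import all_boot all_order all_algebra.
From mathcomp Require Import complex mxtens.
From mathcomp Require Import reals.
Set Implicit Arguments. Unset Strict Implicit. Unset Printing Implicit Defensive.
Import Order.TTheory GRing.Theory Num.Theory.
Local Open Scope ring_scope.

Section NCGraphs.
Variable C : numClosedFieldType.

Definition adjm (m n : nat) (A : 'M[C]_(m, n)) : 'M[C]_(n, m) := (map_mx Num.conj A)^T.

(* U^* V for U : C^n -> C^a and V : C^m -> C^b.  It is only meaningful when
   a = b; conform_mx replaces V by the zero matrix if a <> b (in the theorem
   this product is only inspected when a = b). *)
Definition adjprod (a b n m : nat) (U : 'M[C]_(a, n)) (V : 'M[C]_(b, m)) : 'M[C]_(n, m) :=
  adjm U *m conform_mx (0 : 'M[C]_(a, m)) V.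

Definition inspan (m n : nat) (P : 'M[C]_(m, n) -> Prop) (X : 'M[C]_(m, n)) : Prop :=
  exists (k : nat) (c : 'I_k -> C) (A : 'I_k -> 'M[C]_(m, n)),
    (forall i, P (A i)) /\ X = \sum_(i < k) c i *: A i.

(* A subspace of B(C^n), given by its membership predicate. *)
Definition ncg (n : nat) := 'M[C]_n -> Prop.

Definition ghat (n : nat) (e : rel 'I_n) : ncg n :=
  inspan (fun X => exists x x' : 'I_n, ((x == x') || e x x') /\ X = delta_mx x x').

Definition scal_ncg (d : nat) : ncg d := fun X => exists c : C, X = c%:M.

Definition tens_ncg (m n : nat) (S : ncg m) (T : ncg n) : ncg (m * n) :=
  inspan (fun X => exists (A : 'M[C]_m) (B : 'M[C]_n), S A /\ T B /\ X = A *t B).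

Definition dsum_ncg (r : nat) (p : 'I_r -> nat) (S : forall i, ncg (p i))
  : ncg (\sum_(i < r) p i) :=
  fun X => exists B : forall i, 'M[C]_(p i), (forall i, S i (B i)) /\ X = mxdiag B.

Definition cohom (k n m : nat) (T : ncg k) (S : ncg n) (E : 'I_m -> 'M[C]_(n, k)) : Prop :=
  \sum_(i < m) adjm (E i) *m E i = 1%:M /\
  forall i j (X : 'M[C]_n), S X -> T (adjm (E i) *m X *m E j).

Definition nc_le (k n : nat) (T : ncg k) (S : ncg n) : Prop :=
  exists (m : nat) (E : 'I_m -> 'M[C]_(n, k)), cohom T S E.

(* (+)_{d=1}^r  G_d-hat (x) C_d ; the index d : 'I_r stands for d+1. *)
Definition blockgraph (r : nat) (nG : 'I_r -> nat) (eG : forall d, rel 'I_(nG d))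
  : ncg (\sum_(d < r) nG d * d.+1) :=
  dsum_ncg (fun d : 'I_r => tens_ncg (ghat (eG d)) (@scal_ncg d.+1)).

End NCGraphs.

(* Disjoint union of the vertex sets; the tag d : 'I_r stands for graph d+1,
   so pi(h) = (tag h).+1. *)
Definition vtx (r : nat) (nG : 'I_r -> nat) := {d : 'I_r & 'I_(nG d)}.

Definition pidim (r : nat) (nG : 'I_r -> nat) (h : vtx nG) : nat := (tag h).+1.

Definition simg (r : nat) (nG : 'I_r -> nat) (eG : forall d, rel 'I_(nG d))
  (h h' : vtx nG) : bool :=
  (tag h == tag h') &&
  ((tagged h == tagged_as h h') || eG (tag h) (tagged h) (tagged_as h h')).

(* Main.v *)
Require Import Defs.
From HB Require Import structures.
From mathcomp Require Import all_boot all_order all_algebra.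
From mathcomp Require Import complex mxtens.
From mathcomp Require Import reals.
Set Implicit Arguments. Unset Strict Implicit. Unset Printing Implicit Defensive.
Import Order.TTheory GRing.Theory Num.Theory.
Local Open Scope ring_scope.

Section Idx.
Variables (r : nat) (n : 'I_r -> nat).
Definition pp (d : 'I_r) := (n d * d.+1)%N.
Definition NN := (\sum_(d < r) n d * d.+1)%N.

Definition idx (g : vtx n) (k : 'I_(pidim g)) : 'I_NN :=
  @tagnat.Rank r pp (tag g) (mxtens_index (tagged g, k)).

Definition vof (a : 'I_NN) : vtx n :=
  Tagged (fun d => 'I_(n d)) (mxtens_unindex (@tagnat.sig2 r pp a)).1.
Definition lof (a : 'I_NN) : 'I_(pidim (vof a)) :=
  (mxtens_unindex (@tagnat.sig2 r pp a)).2.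

Lemma idxK a : idx (lof a) = a.
Proof.
rewrite /idx /lof /vof /=.
have -> : mxtens_index ((mxtens_unindex (tagnat.sig2 a)).1,
   (mxtens_unindex (tagnat.sig2 a)).2) = tagnat.sig2 a.
  by rewrite -surjective_pairing mxtens_unindexK.
exact: tagnat.sig2K.
Qed.

Lemma vtx_eq (g g' : vtx n) : tag g = tag g' -> val (tagged g) = val (tagged g') -> g = g'.
Proof.
case: g => d x; case: g' => d' x' /= e; subst d' => e; congr Tagged; exact: val_inj.
Qed.

Lemma idx_inj g g' k k' : @idx g k = @idx g' k' -> g = g' /\ val k = val k'.
Proof.
move=> e.
have /eqP := congr1 val e; rewrite /idx tagnat.eq_Rank => /andP[/eqP et /eqP ev].
case: g k e et ev => d x k; case: g' k' => d' x' k' /= e et; subst d' => ev.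
have /(congr1 (@mxtens_unindex _ _)) : mxtens_index (x, k) = mxtens_index (x', k').
  exact: val_inj.
rewrite !mxtens_indexK => -[-> ->]; split=> //.
Qed.

Lemma vof_idx g k : vof (@idx g k) = g.
Proof. by have [] := idx_inj (idxK (idx k)). Qed.
Lemma lof_idx g k : val (lof (@idx g k)) = val k.
Proof. by have [] := idx_inj (idxK (idx k)). Qed.

Lemma sum_idx (R : nmodType) (F : 'I_NN -> R) :
  \sum_(a < NN) F a = \sum_(g : vtx n) \sum_(k : 'I_(pidim g)) F (idx k).
Proof.
rewrite [RHS](@sig_big_dep _ 0 +%R _ (fun g : vtx n => ('I_(pidim g) : finType)) xpredT (fun _ => xpredT) (fun g k => F (idx k))) /=.
rewrite (reindex (fun p : {g : vtx n & 'I_(pidim g)} => idx (tagged p))) /=.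
  by apply: eq_bigl.
exists (fun a => Tagged (fun g => 'I_(pidim g)) (lof a)) => [p _|a _]; last exact: idxK.
case: p => g k /=.
have e1 := vof_idx k; have e2 := lof_idx k.
move: (lof (idx k)) e2; rewrite e1 => k' e2; congr Tagged; exact: val_inj.
Qed.
End Idx.
Section Span.
Variable C : numClosedFieldType.
Variables (m n : nat) (P : 'M[C]_(m, n) -> Prop).

Lemma inspan_ind (Q : 'M[C]_(m, n) -> Prop) :
  Q 0 -> (forall a b, Q a -> Q b -> Q (a + b)) ->
  (forall c A, P A -> Q (c *: A)) -> forall X, inspan P X -> Q X.
Proof.
move=> Q0 QD QZ X [k [c [A [HA ->]]]].
by apply: (big_ind Q) => // i _; apply: QZ.
Qed.

Lemma inspan0 : inspan P 0.
Proof. by exists 0%N, (fun _ => 0), (fun _ => 0); split; [case | rewrite big_ord0]. Qed.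

Lemma inspan_elem A : P A -> inspan P A.
Proof.
by move=> PA; exists 1%N, (fun _ => 1), (fun _ => A); split=> //; rewrite big_ord1 scale1r.
Qed.

Lemma inspanZ a X : inspan P X -> inspan P (a *: X).
Proof.
move=> [k [c [A [HA ->]]]]; exists k, (fun i => a * c i), A; split=> //.
by rewrite scaler_sumr; apply: eq_bigr => i _; rewrite scalerA.
Qed.

Lemma inspanD X Y : inspan P X -> inspan P Y -> inspan P (X + Y).
Proof.
move=> [k1 [c1 [A1 [H1 ->]]]] [k2 [c2 [A2 [H2 ->]]]].
exists (k1 + k2)%N, (fun i => match split i with inl a => c1 a | inr b => c2 b end),
  (fun i => match split i with inl a => A1 a | inr b => A2 b end); split.
  by move=> i; case: split.
rewrite big_split_ord /=; congr (_ + _); apply: eq_bigr => i _.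
  by rewrite (unsplitK (inl i)).
by rewrite (unsplitK (inr i)).
Qed.

Lemma inspan_sum (I : finType) (F : I -> 'M[C]_(m, n)) :
  (forall i, inspan P (F i)) -> inspan P (\sum_i F i).
Proof.
move=> H; apply: (big_ind (inspan P)) => //; [exact: inspan0 | exact: inspanD].
Qed.
End Span.

Local Unset Implicit Arguments.
Section Char.
Variable C : numClosedFieldType.
Variables (r : nat) (n : 'I_r -> nat) (e : forall d, rel 'I_(n d)).

Lemma mxdiag_Rank_eq (B : forall d, 'M[C]_(pp n d)) d (a b : 'I_(pp n d)) :
  mxdiag B (@tagnat.Rank r (pp n) d a) (@tagnat.Rank r (pp n) d b) = B d a b.
Proof.
rewrite /mxdiag /mxblock mxE /tagnat.sig1 /tagnat.sig2 /tagnat.Rank !tagnat.rankK /=.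
by rewrite eqxx conform_mx_id.
Qed.

Lemma mxdiag_Rank_neq (B : forall d, 'M[C]_(pp n d)) d d' (a : 'I_(pp n d)) (b : 'I_(pp n d')) :
  d != d' -> mxdiag B (@tagnat.Rank r (pp n) d a) (@tagnat.Rank r (pp n) d' b) = 0.
Proof.
move=> /negbTE ne.
by rewrite /mxdiag /mxblock mxE /tagnat.sig1 /tagnat.sig2 /tagnat.Rank !tagnat.rankK /= ne mxE.
Qed.

Definition goodc (c : vtx n -> vtx n -> C) := forall g g', ~~ simg e g g' -> c g g' = 0.
Definition bform (c : vtx n -> vtx n -> C) (X : 'M[C]_(NN n)) :=
  forall g g' (k : 'I_(pidim g)) (k' : 'I_(pidim g')),
    X (idx k) (idx k') = c g g' *+ (val k == val k').

Lemma ghat_zero (d : 'I_r) (Y : 'M[C]_(n d)) : @ghat C (n d) (e d) Y -> forall x x' : 'I_(n d), ~~ ((x == x') || e d x x') -> Y x x' = 0.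
Proof.
move: Y; apply: inspan_ind => [|a b Ha Hb|c A [x0 [x0' [H0 ->]]]] x x' Hn.
- by rewrite mxE.
- by rewrite mxE Ha // Hb // addr0.
- rewrite !mxE; case: (x =P x0) => [ex|]; last by rewrite mulr0.
  case: (x' =P x0') => [ex'|]; last by rewrite mulr0.
  by subst; rewrite H0 in Hn.
Qed.

Lemma tens_form (d : 'I_r) W : tens_ncg (ghat (C:=C) (e d)) (@scal_ncg C d.+1) W ->
  exists cd : 'I_(n d) -> 'I_(n d) -> C,
    (forall x x', ~~ ((x == x') || e d x x') -> cd x x' = 0) /\
    forall x x' (k k' : 'I_d.+1),
      W (mxtens_index (x, k)) (mxtens_index (x', k')) = cd x x' *+ (val k == val k').
Proof.
move: W; apply: inspan_ind.
- by exists (fun _ _ => 0); split=> // *; rewrite mxE mul0rn.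
- move=> a b [ca [Ha1 Ha2]] [cb [Hb1 Hb2]]; exists (fun x x' => ca x x' + cb x x'); split.
    by move=> x x' H; rewrite Ha1 // Hb1 // addr0.
  by move=> x x' k k'; rewrite mxE Ha2 Hb2 mulrnDl.
- move=> c A [Y [Z [HY [[z ->] ->]]]].
  exists (fun x x' => c * (Y x x' * z)); split.
    by move=> x x' H; rewrite (ghat_zero _ _ HY) // mul0r mulr0.
  move=> x x' k k'; rewrite mxE tensmxE mxE.
  by rewrite -mulrnAr -mulrnAr.
Qed.

Lemma tagged_as_same d (x x' : 'I_(n d)) :
  tagged_as (Tagged (fun d => 'I_(n d)) x) (Tagged (fun d => 'I_(n d)) x') = x'.
Proof. by rewrite tagged_asE. Qed.

Lemma bg_fwd X : blockgraph (C:=C) e X -> exists c, goodc c /\ bform c X.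
Proof.
move=> [B [HB ->]].
have /fin_all_exists [cd Hcd] := fun d => tens_form d _ (HB d).
exists (fun g g' => if tag g == tag g' then cd (tag g) (tagged g) (tagged_as g g') else 0).
split.
  move=> g g'; rewrite /simg; case: eqP => //= _ H.
  by case: (Hcd (tag g)) => H1 _; apply: H1.
move=> [d x] [d' x'] /= k k'.
case: (d =P d') => [ed|/eqP ne]; last by rewrite /idx /= mxdiag_Rank_neq // mul0rn.
subst d'; rewrite /idx /= mxdiag_Rank_eq tagged_as_same.
by case: (Hcd d) => _ ->.
Qed.

Lemma bg_bwd c X : goodc c -> bform c X -> blockgraph (C:=C) e X.
Proof.
move=> Hg Hf.
pose B d : 'M[C]_(n d * d.+1) := \matrix_(a, b)
   (c (Tagged (fun d => 'I_(n d)) (@mxtens_unindex (n d) d.+1 a).1)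
     (Tagged (fun d => 'I_(n d)) (@mxtens_unindex (n d) d.+1 b).1)
   *+ (val (@mxtens_unindex (n d) d.+1 a).2 == val (@mxtens_unindex (n d) d.+1 b).2)).
exists B; split.
  move=> d.
  have -> : B d = \sum_(x : 'I_(n d)) \sum_(x' : 'I_(n d))
     c (Tagged (fun d => 'I_(n d)) x) (Tagged (fun d => 'I_(n d)) x')
       *: (delta_mx x x' *t (1%:M : 'M[C]_d.+1)).
    apply/matrixP => a b.
    case: (mxtens_indexP a) => x1 k1; case: (mxtens_indexP b) => x2 k2.
    rewrite [LHS]mxE !mxtens_indexK /= summxE (bigD1 x1) //= [X in _ + X]big1 => [|x nx]; last first.
      by rewrite summxE big1 // => x' _; rewrite mxE tensmxE !mxE eq_sym (negbTE nx) /= mul0r mulr0.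
    rewrite summxE (bigD1 x2) //= addr0 [X in _ + X]big1 => [|x' nx]; last first.
      by rewrite mxE tensmxE !mxE eq_sym (negbTE nx) andbF /= mul0r mulr0.
    by rewrite mxE tensmxE !mxE !eqxx /= mul1r addr0 mulr_natr.
  apply: inspan_sum => x; apply: inspan_sum => x'.
  have [gd|bd] := boolP ((x == x') || e d x x').
    apply: inspanZ; apply: inspan_elem.
    exists (delta_mx x x'), 1%:M; split.
      by apply: inspan_elem; exists x, x'.
    by split=> //; exists 1.
  rewrite Hg ?scale0r; first exact: inspan0.
  by rewrite /simg /= eqxx /= tagged_as_same.
apply/matrixP => a b.
rewrite -(idxK a) -(idxK b) Hf.
move: (vof a) (vof b) (lof a) (lof b) => [d x] [d' x'] /= k k'.
case: (d =P d') => [ed|/eqP ne].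
  subst d'; rewrite /idx /= mxdiag_Rank_eq mxE !mxtens_indexK //.
rewrite /idx /= mxdiag_Rank_neq // Hg ?mul0rn //.
by rewrite /simg /= (negbTE ne).
Qed.

End Char.

From mathcomp Require Import ring.

Set Implicit Arguments.
Section Comp.
Variable C : numClosedFieldType.

Lemma adjmE (m n : nat) (A : 'M[C]_(m, n)) i j : adjm A i j = (A j i)^*.
Proof. by rewrite /adjm !mxE. Qed.

Lemma adjprodE (a b n m : nat) (et : a = b) (U : 'M[C]_(a, n)) (V : 'M[C]_(b, m)) i j :
  adjprod U V i j = \sum_(l < a) (U l i)^* * V (cast_ord et l) j.
Proof.
case: b / et in V *; rewrite /adjprod conform_mx_id mxE.
by apply: eq_bigr => l _; rewrite adjmE cast_ord_id.
Qed.

Lemma sum_diag (a b : nat) (et : a = b) (F : 'I_a -> 'I_b -> C) :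
  \sum_(l < a) \sum_(l' < b) F l l' *+ (val l == val l') =
  \sum_(l < a) F l (cast_ord et l).
Proof.
case: b / et in F *; apply: eq_bigr => l _; rewrite cast_ord_id.
rewrite (bigD1 l) //= eqxx mulr1n big1 ?addr0 // => l' nl.
by rewrite val_eqE eq_sym (negbTE nl) mulr0n.
Qed.

Variables (r : nat) (nG nH : 'I_r -> nat).
Notation NG := (NN nG). Notation NH := (NN nH).

Definition inner (E E' : 'M[C]_(NG, NH)) (g g' : vtx nG) a b :=
  \sum_(l : 'I_(pidim g)) \sum_(l' : 'I_(pidim g'))
     (E (idx l) a)^* * E' (idx l') b *+ (val l == val l').

Lemma sandwichX (E E' : 'M[C]_(NG, NH)) (c : vtx nG -> vtx nG -> C) (X : 'M[C]_NG) a b :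
  @bform C r nG c X ->
  (adjm E *m X *m E') a b = \sum_g \sum_g' c g g' * inner E E' g g' a b.
Proof.
move=> bf; rewrite mxE sum_idx.
under eq_bigr do under eq_bigr do rewrite mxE sum_idx big_distrl /=.
under eq_bigr do under eq_bigr do under eq_bigr do rewrite big_distrl /=.
under eq_bigr do rewrite exchange_big /=.
under eq_bigr do under eq_bigr do rewrite exchange_big /=.
rewrite exchange_big /=; apply: eq_bigr => g _; apply: eq_bigr => g' _.
rewrite /inner big_distrr /=; apply: eq_bigr => l _.
rewrite big_distrr /=; apply: eq_bigr => l' _.
rewrite adjmE bf; case: (_ == _); rewrite ?mulr0n ?mulr1n ?mulr0 ?mul0r //.
ring.
Qed.

Lemma inner_cast (E E' : 'M[C]_(NG, NH)) g g' (et : pidim g = pidim g') a b :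
  inner E E' g g' a b = \sum_(l : 'I_(pidim g)) (E (idx l) a)^* * E' (idx (cast_ord et l)) b.
Proof. rewrite /inner; exact: (sum_diag et (fun (l : 'I_(pidim g)) (l' : 'I_(pidim g')) => (E (idx l) a)^* * E' (idx l') b)). Qed.

End Comp.

Section Dir21.
Variable C : numClosedFieldType.
Variables (r : nat) (nG nH : 'I_r -> nat).
Variables (eG : forall d, rel 'I_(nG d)) (eH : forall d, rel 'I_(nH d)).
Variables (phi : vtx nH -> vtx nG) (U : forall h : vtx nH, 'M[C]_(pidim (phi h), pidim h)).
Hypothesis Uiso : forall h, adjm (U h) *m U h = 1%:M.
Hypothesis cond2 : forall h h', ~~ simg eH h h' ->
        ~~ simg eG (phi h) (phi h') \/ adjprod (U h) (U h') = 0.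
Hypothesis cond3 : forall h h', simg eH h h' -> simg eG (phi h) (phi h') ->
        exists c : C, forall (i : 'I_(pidim h)) (j : 'I_(pidim h')),
          adjprod (U h) (U h') i j = c *+ (nat_of_ord i == nat_of_ord j).

Definition Eh (h : vtx nH) : 'M[C]_(NN nG, NN nH) := \matrix_(a, b)
  (if (vof a == phi h) && (vof b == h) then U h (inord (lof a)) (inord (lof b)) else 0).

Lemma EhE h g h1 (l : 'I_(pidim g)) (k : 'I_(pidim h1)) :
  Eh h (idx l) (idx k) = if (g == phi h) && (h1 == h) then U h (inord l) (inord k) else 0.
Proof. by rewrite mxE !lof_idx !vof_idx. Qed.

Lemma idx_eq (h1 h2 : vtx nH) (k1 : 'I_(pidim h1)) (k2 : 'I_(pidim h2)) :
  (idx k1 == idx k2) = (h1 == h2) && (val k1 == val k2).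
Proof.
apply/eqP/andP => [/idx_inj [e1 ->]|[/eqP e1 /eqP e2]]; first by subst h2; rewrite !eqxx.
subst h2; congr idx; exact: val_inj.
Qed.

Lemma sum1 : \sum_(i < #|{: vtx nH}|) adjm (Eh (enum_val i)) *m Eh (enum_val i) = 1%:M.
Proof.
rewrite -(big_enum_val (A := {: vtx nH}) (fun h => adjm (Eh h) *m Eh h)) /=.
apply/matrixP => a b; rewrite -(idxK a) -(idxK b).
move: (vof a) (lof a) (vof b) (lof b) => h1 k1 h2 k2.
rewrite summxE.
have H : forall h, (adjm (Eh h) *m Eh h) (idx k1) (idx k2) =
   if (h1 == h) && (h2 == h) then ((inord k1 : 'I_(pidim h)) == inord k2)%:R else 0.
  move=> h; rewrite mxE sum_idx (bigD1 (phi h)) //= [X in _ + X]big1 => [|g ng]; last first.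
    by apply: big1 => l _; rewrite adjmE !EhE (negbTE ng) /= conjC0 mul0r.
  rewrite addr0; case: (h1 =P h) => [e1|ne1]; last first.
    by apply: big1 => l _; rewrite adjmE !EhE (introF eqP ne1) andbF conjC0 mul0r.
  case: (h2 =P h) => [e2|ne2]; last first.
    by apply: big1 => l _; rewrite adjmE !EhE (introF eqP ne2) andbF mulr0.
  subst h1 h2; rewrite ?eqxx /=.
  have := congr1 (fun M : 'M[C]_(pidim h) => M (inord k1) (inord k2)) (Uiso h); rewrite /= [LHS]mxE [RHS]mxE => <-.
  by apply: eq_bigr => l _; rewrite !adjmE !EhE !eqxx /= (@inord_val (tag (phi h)) l).
rewrite (eq_bigr _ (fun h _ => H h)) mxE idx_eq.
case: (h1 =P h2) => [e12|ne12] /=; last first.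
  by rewrite big1 // => h _; case: (h1 =P h) => // e1; case: (h2 =P h) => // e2; subst.
subst h2; rewrite (bigD1 h1) //= eqxx big1 ?addr0 => [|h nh]; last by rewrite eq_sym (negbTE nh).
by rewrite !(@inord_val (tag h1)).
Qed.


Lemma EhE2 h (l : 'I_(pidim (phi h))) (k : 'I_(pidim h)) :
  Eh h (idx l) (idx k) = U h l k.
Proof. by rewrite EhE !eqxx /= (@inord_val (tag (phi h)) l) (@inord_val (tag h) k). Qed.

Lemma inner_zeroL h E' g g' a b : g != phi h -> inner (Eh h) E' g g' a b = 0.
Proof.
move=> ng; apply: big1 => l _; apply: big1 => l' _.
by rewrite mxE lof_idx vof_idx (negbTE ng) /= conjC0 !mul0r mul0rn.
Qed.

Lemma inner_zeroR h' E g g' a b : g' != phi h' -> inner E (Eh h') g g' a b = 0.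
Proof.
move=> ng; apply: big1 => l _; apply: big1 => l' _.
by rewrite [Eh h' _ _]mxE lof_idx vof_idx (negbTE ng) /= mulr0 mul0rn.
Qed.

Lemma inner_zeroL2 h E' g g' h1 (k1 : 'I_(pidim h1)) b : h1 != h -> inner (Eh h) E' g g' (idx k1) b = 0.
Proof.
move=> ng; apply: big1 => l _; apply: big1 => l' _.
by rewrite EhE (negbTE ng) andbF conjC0 !mul0r mul0rn.
Qed.

Lemma inner_zeroR2 h' E g g' a h2 (k2 : 'I_(pidim h2)) : h2 != h' -> inner E (Eh h') g g' a (idx k2) = 0.
Proof.
move=> ng; apply: big1 => l _; apply: big1 => l' _.
by rewrite EhE (negbTE ng) andbF mulr0 mul0rn.
Qed.

Lemma Tmem h h' X : blockgraph (C:=C) eG X -> blockgraph (C:=C) eH (adjm (Eh h) *m X *m Eh h').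
Proof.
move=> /(bg_fwd C r nG eG X) [c [gc bf]].
have [mu [mu0 Hmu]] : exists mu : C, (~~ simg eH h h' -> mu = 0) /\
   forall (k1 : 'I_(pidim h)) (k2 : 'I_(pidim h')),
     c (phi h) (phi h') * inner (Eh h) (Eh h') (phi h) (phi h') (idx k1) (idx k2)
       = mu *+ (val k1 == val k2).
  case sG: (simg eG (phi h) (phi h')); last first.
    by exists 0; split=> // k1 k2; rewrite gc ?sG // mul0r mul0rn.
  have et : pidim (phi h) = pidim (phi h').
    by move: sG => /andP [/eqP et' _]; rewrite /pidim et'.
  have Hadj : forall (k1 : 'I_(pidim h)) (k2 : 'I_(pidim h')),
      inner (Eh h) (Eh h') (phi h) (phi h') (idx k1) (idx k2) = adjprod (U h) (U h') k1 k2.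
    move=> k1 k2; rewrite (inner_cast _ _ et) (adjprodE et).
    by apply: eq_bigr => l _; rewrite !EhE2.
  case sH: (simg eH h h').
    have [ga Hga] := cond3 sH sG.
    by exists (c (phi h) (phi h') * ga); split=> // k1 k2; rewrite Hadj Hga mulrnAr.
  have [|Hz] := cond2 (negbT sH); first by rewrite sG.
  by exists 0; split=> // k1 k2; rewrite Hadj Hz mxE mulr0 mul0rn.
apply: (bg_bwd C r nH eH (fun h1 h2 => if (h1 == h) && (h2 == h') then mu else 0)).
  move=> h1 h2 ns; case: (h1 =P h) => [e1|] //=; case: (h2 =P h') => [e2|] //=.
  by subst; apply: mu0.
move=> h1 h2 k1 k2; rewrite (sandwichX _ _ _ _ bf).
rewrite (bigD1 (phi h)) //= [X in _ + X]big1 ?addr0 => [|g ng]; last first.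
  by apply: big1 => g' _; rewrite inner_zeroL // mulr0.
rewrite (bigD1 (phi h')) //= [X in _ + X]big1 ?addr0 => [|g' ng]; last first.
  by rewrite inner_zeroR // mulr0.
case: (h1 =P h) => [e1|/eqP ne1] /=; last by rewrite inner_zeroL2 // mulr0 mul0rn.
case: (h2 =P h') => [e2|/eqP ne2] /=; last by rewrite inner_zeroR2 // mulr0 mul0rn.
by subst; apply: Hmu.
Qed.

Lemma dir21 : nc_le (blockgraph (C:=C) eH) (blockgraph (C:=C) eG).
Proof.
exists #|{: vtx nH}|, (fun i => Eh (enum_val i)); split; first exact: sum1.
by move=> i j X HX; apply: Tmem.
Qed.

End Dir21.

Section Dir12.
Variable C : numClosedFieldType.
Variables (r : nat) (nG nH : 'I_r -> nat).
Variables (eG : forall d, rel 'I_(nG d)) (eH : forall d, rel 'I_(nH d)).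
Variables (m : nat) (E : 'I_m -> 'M[C]_(NN nG, NN nH)).
Hypothesis Hsum : \sum_(i < m) adjm (E i) *m E i = 1%:M.
Hypothesis HT : forall i j (X : 'M[C]_(NN nG)), blockgraph (C:=C) eG X ->
   blockgraph (C:=C) eH (adjm (E i) *m X *m E j).

Definition Mof (g g' : vtx nG) : 'M[C]_(NN nG) := \matrix_(a, b)
  (((vof a == g) && (vof b == g'))%:R *+ (val (lof a) == val (lof b))).

Lemma Mof_bform g g' : bform C r nG (fun x y => ((x == g) && (y == g'))%:R) (Mof g g').
Proof. by move=> x y k k'; rewrite mxE !lof_idx !vof_idx. Qed.

Lemma Mof_S g g' : simg eG g g' -> blockgraph (C:=C) eG (Mof g g').
Proof.
move=> sg; apply: (bg_bwd C r nG eG _ _ _ (Mof_bform g g')).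
move=> x y ns; case: (x =P g) => [ex|] //=; case: (y =P g') => [ey|] //=.
by subst; rewrite sg in ns.
Qed.

Lemma sandwichM (A A' : 'M[C]_(NN nG, NN nH)) g g' a b :
  (adjm A *m Mof g g' *m A') a b = inner A A' g g' a b.
Proof.
rewrite (sandwichX _ _ _ _ (Mof_bform g g')).
rewrite (bigD1 g) //= [X in _ + X]big1 ?addr0 => [|x nx]; last first.
  by apply: big1 => y _; rewrite (negbTE nx) mul0r.
rewrite (bigD1 g') //= [X in _ + X]big1 ?addr0 => [|y ny]; last first.
  by rewrite (negbTE ny) andbF mul0r.
by rewrite !eqxx mul1r.
Qed.

Definition blk i g (h : vtx nH) : 'M[C]_(pidim g, pidim h) :=
  \matrix_(k, k') E i (idx k) (idx k').

Lemma blk_ex h : exists p : 'I_m * vtx nG, blk p.1 p.2 h != 0.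
Proof.
case: (boolP [exists p : 'I_m * vtx nG, blk p.1 p.2 h != 0]) => [/existsP //|/existsPn H].
exfalso.
pose z : 'I_(pidim h) := ord0.
have := congr1 (fun M : 'M[C]_(NN nH) => M (idx z) (idx z)) Hsum.
rewrite /= [RHS]mxE eqxx /= summxE big1 => [|i _].
  by move/eqP; rewrite eq_sym oner_eq0.
rewrite mxE sum_idx; apply: big1 => g _; apply: big1 => k _.
have /eqP/matrixP/(_ k z) := negbNE (H (i, g)).
by rewrite !mxE => ->; rewrite mulr0.
Qed.

Lemma ex_nz (a b : nat) (M : 'M[C]_(a, b)) : M != 0 -> exists l k, M l k != 0.
Proof.
move=> nz.
case: (boolP [exists l, exists k, M l k != 0]) => [/existsP [l /existsP [k Hk]]|/existsPn H].
  by exists l, k.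
case/eqP: nz; apply/matrixP => l k; rewrite mxE.
by have /existsPn/(_ k)/negbNE/eqP := H l.
Qed.

Lemma adjprodZ (a b n n' : nat) (et : a = b) (x y : C) (V : 'M[C]_(a, n)) (W : 'M[C]_(b, n')) i j :
  adjprod (x *: V) (y *: W) i j = x^* * y * adjprod V W i j.
Proof.
rewrite !(adjprodE et) mulr_sumr; apply: eq_bigr => l _; rewrite !mxE rmorphM /=.
ring.
Qed.

Lemma scal_inv (lam : C) : 0 < lam ->
  ((sqrtC lam)^-1)^* = (sqrtC lam)^-1 /\ (sqrtC lam)^-1 * (sqrtC lam)^-1 * lam = 1.
Proof.
move=> lp; have sp : 0 < sqrtC lam by rewrite sqrtC_gt0.
split; first by rewrite geC0_conj // invr_ge0 ltW.
have sn : sqrtC lam != 0 by rewrite gt_eqF.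
by rewrite -{3}(sqrtCK lam) expr2 mulrACA mulVf // mul1r.
Qed.

Lemma dir12 : exists (phi : vtx nH -> vtx nG)
         (U : forall h : vtx nH, 'M[C]_(pidim (phi h), pidim h)),
    (forall h, adjm (U h) *m U h = 1%:M) /\
    (forall h h', ~~ simg eH h h' ->
        ~~ simg eG (phi h) (phi h') \/ adjprod (U h) (U h') = 0) /\
    (forall h h', simg eH h h' -> simg eG (phi h) (phi h') ->
        exists c : C, forall (i : 'I_(pidim h)) (j : 'I_(pidim h')),
          adjprod (U h) (U h') i j = c *+ (nat_of_ord i == nat_of_ord j)).
Proof.
have [ch Hch] := fin_all_exists blk_ex.
pose phi h := (ch h).2.
pose A h : 'M[C]_(pidim (phi h), pidim h) := blk (ch h).1 (phi h) h.
have key : forall h h' (et : pidim (phi h) = pidim (phi h')), simg eG (phi h) (phi h') ->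
    exists mu : C, (~~ simg eH h h' -> mu = 0) /\
      forall (k1 : 'I_(pidim h)) (k2 : 'I_(pidim h')),
        adjprod (A h) (A h') k1 k2 = mu *+ (val k1 == val k2).
  move=> h h' et sG.
  have := HT (ch h).1 (ch h').1 (Mof_S sG).
  move=> /(bg_fwd C r nH eH) [c [gc bf]].
  exists (c h h'); split; first exact: gc.
  move=> k1 k2; rewrite -bf sandwichM (inner_cast _ _ et) (adjprodE et).
  by apply: eq_bigr => l _; rewrite !mxE.
have lamex : forall h, exists lam : C, 0 < lam /\
    forall k1 k2 : 'I_(pidim h), adjprod (A h) (A h) k1 k2 = lam *+ (val k1 == val k2).
  move=> h.
  have sG : simg eG (phi h) (phi h).
    by case: (phi h) => d x; rewrite /simg /= eqxx /= tagged_asE eqxx.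
  have [mu [_ Hmu]] := key h h erefl sG.
  exists mu; split=> //.
  have [l [k nz]] := ex_nz (Hch h).
  have := Hmu k k; rewrite eqxx mulr1n (adjprodE erefl) => <-.
  rewrite (bigD1 l) //= cast_ord_id.
  apply: (lt_le_trans (y := (A h l k)^* * A h l k)).
    by rewrite mulrC mul_conjC_gt0.
  rewrite lerDl; apply: sumr_ge0 => l' _; rewrite cast_ord_id mulrC mul_conjC_ge0 //.
have [lam Hlam] := fin_all_exists lamex.
pose s h := (sqrtC (lam h))^-1.
exists phi, (fun h => s h *: A h); split.
  move=> h; apply/matrixP => k1 k2.
  have [lp Hl] := Hlam h.
  have [sc ss] := scal_inv lp.
  have -> : (adjm (s h *: A h) *m (s h *: A h)) k1 k2 = adjprod (s h *: A h) (s h *: A h) k1 k2.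
    by rewrite /adjprod conform_mx_id.
  by rewrite (adjprodZ erefl) Hl /s sc mxE mulrnAr ss.
split.
  move=> h h' nsH; case sG: (simg eG (phi h) (phi h')); [right | by left].
  have et : pidim (phi h) = pidim (phi h').
    by move: sG => /andP [/eqP et' _]; rewrite /pidim et'.
  have [mu [mu0 Hmu]] := key h h' et sG.
  apply/matrixP => k1 k2; rewrite (adjprodZ et) Hmu mu0 // mul0rn mulr0 mxE //.
move=> h h' sH sG.
have et : pidim (phi h) = pidim (phi h').
  by move: sG => /andP [/eqP et' _]; rewrite /pidim et'.
have [mu [mu0 Hmu]] := key h h' et sG.
exists ((s h)^* * s h' * mu) => k1 k2.
by rewrite (adjprodZ et) Hmu mulrnAr.
Qed.

End Dir12.

Unset Implicit Arguments.

Theorem lemma3p5 (R : realType) (r : nat)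
  (nG nH : 'I_r -> nat)
  (eG : forall d, rel 'I_(nG d)) (eH : forall d, rel 'I_(nH d))
  (symG : forall d, symmetric (eG d)) (irrG : forall d, irreflexive (eG d))
  (symH : forall d, symmetric (eH d)) (irrH : forall d, irreflexive (eH d)) :
  nc_le (blockgraph (C := R[i]) eH) (blockgraph (C := R[i]) eG) <->
  exists (phi : vtx nH -> vtx nG)
         (U : forall h : vtx nH, 'M[R[i]]_(pidim (phi h), pidim h)),
    (forall h, adjm (U h) *m U h = 1%:M) /\
    (forall h h', ~~ simg eH h h' ->
        ~~ simg eG (phi h) (phi h') \/ adjprod (U h) (U h') = 0) /\
    (forall h h', simg eH h h' -> simg eG (phi h) (phi h') ->
        exists c : R[i], forall (i : 'I_(pidim h)) (j : 'I_(pidim h')),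
          adjprod (U h) (U h') i j = c *+ (nat_of_ord i == nat_of_ord j)).
Proof.
split.
  by move=> [m [E [Hs HT]]]; apply: dir12 Hs HT.
by move=> [phi [U [H1 [H2 H3]]]]; apply: dir21 H1 H2 H3.
Qed.
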